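(* Let $n$ be a positive even integer and $m$ a positive integer. Then $$\sum_{k=1}^\infty\frac{F_n^{2k}5^k\binom{2k}{2m}}{L_n^{2k}(2k-1)(2k)(2k+1)}=\frac{L_n}{4F_n}\sum_{j=0}^{m-1}\frac{5^{m-j}}{2m-2j}\frac{F_n^{2m-2j}}{2^{2m-2j}}F_{n(2m-2j)}-\frac{L_n}{4F_n}\sum_{j=1}^{m}\frac{5^{m-j}}{2m-2j+1}\frac{F_n^{2m-2j+1}}{2^{2m-2j+1}}L_{n(2m-2j+1)}$$ $$-\frac{5^m}{m}\frac{F_n^{2m}}{2^{2m+2}}L_{2nm}+\frac1{L_n}\frac{5^{m+1}}{m}\frac{F_n^{2m+1}}{2^{2m+3}}F_{2nm}+\frac1{L_n}\frac{5^m}{2m-1}\frac{F_n^{2m}}{2^{2m+1}}L_{n(2m-1)}+\frac{nL_n}{2F_n\sqrt5}\ln\alpha,$$ and $$\sum_{k=1}^\infty\frac{F_n^{2k}5^k\binom{2k}{2m+1}}{L_n^{2k}(2k-1)(2k)(2k+1)}=\frac{L_n}{4F_n}\sum_{j=0}^{m}\frac{5^{m-j}}{2m-2j+1}\frac{F_n^{2m-2j+1}}{2^{2m-2j+1}}L_{n(2m-2j+1)}-\frac{L_n}{4F_n}\sum_{j=1}^{m}\frac{5^{m-j+1}}{2m-2j+2}\frac{F_n^{2m-2j+2}}{2^{2m-2j+2}}F_{n(2m-2j+2)}$$ $$-\frac{5^{m+1}}{2m+1}\frac{F_n^{2m+1}}{2^{2m+2}}F_{n(2m+1)}+\frac1{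L_n}\frac{5^{m+1}}{2m+1}\frac{F_n^{2m+2}}{2^{2m+3}}L_{n(2m+1)}+\frac1{L_n}\frac{5^{m+1}}{m}\frac{F_n^{2m+1}}{2^{2m+3}}F_{2mn}-\frac{nL_n}{2F_n\sqrt5}\ln\alpha.$$
   Context: $F_n=(\alpha^n-\beta^n)/(\alpha-\beta)$ and $L_n=\alpha^n+\beta^n$ are the Fibonacci and Lucas numbers, with $\alpha=(1+\sqrt5)/2$, $\beta=(1-\sqrt5)/2$. *)

(* Defs.v *)
From Stdlib Require Import Reals Lra Lia Arith.
From Coquelicot Require Import Coquelicot.
Open Scope R_scope.

Definition alpha : R := (1 + sqrt 5) / 2.
Definition beta : R := (1 - sqrt 5) / 2.

Definition Fib (n : nat) : R := (alpha ^ n - beta ^ n) / (alpha - beta).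
Definition Luc (n : nat) : R := alpha ^ n + beta ^ n.

Fixpoint binom (n k : nat) : nat :=
  match n, k with
  | _, O => 1%nat
  | O, S _ => 0%nat
  | S n', S k' => (binom n' k' + binom n' (S k'))%nat
  end.

(* General term of the series, for k >= 1, with binomial index r. *)
Definition term (n r k : nat) : R :=
  Fib n ^ (2 * k) * 5 ^ k * INR (binom (2 * k) r)
  / (Luc n ^ (2 * k) * ((2 * INR k - 1) * (2 * INR k) * (2 * INR k + 1))).

(* Main.v *)
Require Import Defs.
From Stdlib Require Import Reals Lra Lia Arith.
From Coquelicot Require Import Coquelicot.
Open Scope R_scope.

Lemma binom_n0' n : binom n 0 = 1%nat.
Proof. destruct n; reflexivity. Qed.

Lemma binom_mul n k : (binom (S n) (S k) * S k = S n * binom n k)%nat.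
Proof.
  revert k; induction n as [|n IH]; intros k.
  - destruct k; simpl; lia.
  - destruct k as [|k].
    + change (binom (S (S n)) 1) with (binom (S n) 0 + binom (S n) 1)%nat.
      pose proof (IH 0%nat). rewrite binom_n0' in *. simpl in *. lia.
    + change (binom (S (S n)) (S (S k))) with (binom (S n) (S k) + binom (S n) (S (S k)))%nat.
      pose proof (IH k) as H1. pose proof (IH (S k)) as H2.
      change (binom (S n) (S k)) with (binom n k + binom n (S k))%nat in *.
      nia.
Qed.

Lemma binom_mulR n k : INR (binom (S n) (S k)) * INR (S k) = INR (S n) * INR (binom n k).
Proof. rewrite <- !mult_INR. f_equal. apply binom_mul. Qed.

Lemma binom_SS n k : binom (S n) (S k) = (binom n k + binom n (S k))%nat.
Proof. reflexivity. Qed.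

Lemma binom_0S k : binom 0 (S k) = 0%nat.
Proof. reflexivity. Qed.

Lemma binom_n0 n : binom n 0 = 1%nat.
Proof. destruct n; reflexivity. Qed.

Lemma ser_iff (a : nat -> R) (l : R) : is_series a l <-> is_lim_seq (sum_n a) l.
Proof. split; intro H; exact H. Qed.

Lemma ser_plus a b la lb : is_series a la -> is_series b lb ->
  is_series (fun n => a n + b n) (la + lb).
Proof. intros. apply (is_series_plus a b la lb); auto. Qed.

Lemma ser_minus a b la lb : is_series a la -> is_series b lb ->
  is_series (fun n => a n - b n) (la - lb).
Proof. intros. apply (is_series_minus a b la lb); auto. Qed.

Lemma ser_scal c a l : is_series a l -> is_series (fun n => c * a n) (c * l).
Proof. intros. apply (is_series_scal c a l); auto. Qed.

Lemma ser_ext (a b : nat -> R) (l : R) : (forall n, a n = b n) -> is_series a l -> is_series b l.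
Proof. intros. eapply is_series_ext; eauto. Qed.

Lemma ser_shift (a : nat -> R) (l : R) : is_series a l -> is_series (fun k => a (S k)) (l - a 0%nat).
Proof. intros H. apply is_series_incr_1. unfold plus; simpl. replace (l - a 0%nat + a 0%nat) with l by ring. exact H. Qed.

Lemma ser_unique (a : nat -> R) (l l' : R) : is_series a l -> is_series a l' -> l = l'.
Proof. intros H H'. apply is_series_unique in H. apply is_series_unique in H'. congruence. Qed.

Lemma ser_zero : @is_series R_AbsRing R_NormedModule (fun _ : nat => 0) 0.
Proof. apply ser_iff. eapply is_lim_seq_ext; [|apply is_lim_seq_const].
  intros n; simpl. induction n. rewrite sum_O; auto. rewrite sum_Sn, <- IHn. unfold plus; simpl; ring. Qed.

Lemma ser_sum_n_m (f : nat -> nat -> R) (l : nat -> R) p q :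
  (forall i, is_series (f i) (l i)) ->
  is_series (fun k => sum_n_m (fun i => f i k) p q) (sum_n_m l p q).
Proof.
  intros H. induction q as [|q IH].
  - destruct p.
    + eapply ser_ext; [|rewrite sum_n_n; apply (H 0%nat)]. intros; rewrite sum_n_n; auto.
    + rewrite sum_n_m_zero by lia. eapply ser_ext; [|apply ser_zero].
      intros; rewrite sum_n_m_zero by lia; auto.
  - destruct (le_lt_dec p (S q)).
    + rewrite sum_n_Sm by lia. eapply ser_ext; [|apply (ser_plus _ _ _ _ IH (H (S q)))].
      intros; rewrite sum_n_Sm by lia; auto.
    + rewrite sum_n_m_zero by lia. eapply ser_ext; [|apply ser_zero].
      intros; rewrite sum_n_m_zero by lia; auto.
Qed.


Lemma sub_2 : filterlim (fun n => (2 * n)%nat) eventually eventually.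
Proof. intros P [N HN]. exists N. intros n Hn. apply HN. lia. Qed.

Lemma sub_add N : filterlim (fun n => (n + N)%nat) eventually eventually.
Proof. intros P [M HM]. exists M. intros n Hn. apply HM. lia. Qed.

Lemma ser_even (a : nat -> R) (l : R) : (forall k, a (2 * k + 1)%nat = 0) -> is_series a l ->
  is_series (fun k => a (2 * k)%nat) l.
Proof.
  intros Hz H0. apply ser_iff. assert (H : is_lim_seq (sum_n a) l) by exact H0.
  eapply is_lim_seq_ext; [|apply (is_lim_seq_subseq _ _ _ sub_2 H)].
  intros N. induction N.
  - rewrite !sum_O. reflexivity.
  - rewrite (sum_Sn (fun k => a (2 * k)%nat)), <- IHN.
    replace (2 * S N)%nat with (S (S (2 * N))) by lia.
    rewrite !sum_Sn. replace (S (2 * N)) with (2 * N + 1)%nat by lia.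
    rewrite Hz. change (plus ?x ?y) with (x + y). change (plus ?x ?y) with (x + y). ring.
Qed.

Lemma ser_odd (a : nat -> R) (l : R) : a 0%nat = 0 -> (forall k, a (2 * k + 2)%nat = 0) -> is_series a l ->
  is_series (fun k => a (2 * k + 1)%nat) l.
Proof.
  intros H0 Hz H. apply ser_shift in H. rewrite H0, Rminus_0_r in H.
  eapply ser_ext; [|apply (ser_even (fun k => a (S k)))]; auto.
  - intros; simpl. f_equal; lia.
  - intros k. replace (S (2 * k + 1)) with (2 * k + 2)%nat by lia. auto.
Qed.

Lemma partial_le (a : nat -> R) (A : R) N : (forall n, 0 <= a n) -> is_series a A -> sum_n a N <= A.
Proof.
  intros Hp H0. assert (H : is_lim_seq (sum_n a) A) by exact H0.
  assert (H2 := is_lim_seq_subseq _ _ _ (sub_add N) H).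
  assert (Hle : forall n, sum_n a N <= sum_n a (n + N)).
  { induction n. simpl; lra. simpl. rewrite sum_Sn. unfold plus; simpl. specialize (Hp (S (n + N))). lra. }
  apply (is_lim_seq_le _ _ _ _ Hle (is_lim_seq_const _) H2).
Qed.

Definition Tf (s : nat) (x : R) : R := x ^ s / (1 - x) ^ (S s).

Lemma bsum_rel (a b : nat -> R) z : b 0%nat = 0 -> (forall j, b (S j) = z * (a j + b j)) ->
  forall N, sum_n b (S N) = z * (sum_n a N + sum_n b N).
Proof.
  intros H0 HS. induction N.
  - rewrite sum_Sn, !sum_O, HS, H0. unfold plus; simpl. ring.
  - assert (E2 : sum_n b (S N) = sum_n b N + b (S N)) by (rewrite sum_Sn; auto).
    rewrite E2 in IHN.
    rewrite sum_Sn, (HS (S N)), (sum_Sn a), E2. change (plus ?x ?y) with (x + y) in *. change (plus ?x ?y) with (x + y) in *. nra.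
Qed.

Definition ba (s : nat) (x : R) (j : nat) : R := INR (binom j s) * x ^ j.

Lemma ba_rel s x j : ba (S s) x (S j) = x * (ba s x j + ba (S s) x j).
Proof. unfold ba. rewrite binom_SS, plus_INR. simpl. ring. Qed.

Lemma ba_0 s x : ba (S s) x 0 = 0.
Proof. unfold ba. rewrite binom_0S. simpl. ring. Qed.

Lemma rec_step s x : Rabs x < 1 -> is_series (ba s x) (Tf s x) -> ex_series (ba (S s) x) ->
  is_series (ba (S s) x) (Tf (S s) x).
Proof.
  intros Hx Ha [l Hb].
  assert (H1 := ser_shift _ _ Hb). rewrite ba_0, Rminus_0_r in H1.
  assert (H2 : is_series (fun j => x * (ba s x j + ba (S s) x j)) (x * (Tf s x + l))).
  { apply ser_scal. apply ser_plus; auto. }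
  assert (H3 : l = x * (Tf s x + l)).
  { eapply ser_unique; [apply H1|]. eapply ser_ext; [|apply H2]. intros; rewrite ba_rel; auto. }
  assert (Hx1 : 1 - x <> 0) by (apply Rabs_lt_between in Hx; lra).
  replace (Tf (S s) x) with l; auto.
  unfold Tf in *. apply (Rmult_eq_reg_l (1 - x)); auto.
  transitivity (x * Tf s x). unfold Tf; lra.
  unfold Tf. simpl. field. split; auto. apply pow_nonzero; auto.
Qed.

Lemma T_nonneg s z : 0 <= z < 1 -> is_series (ba s z) (Tf s z).
Proof.
  intros Hz. induction s.
  - unfold Tf. replace (z ^ 0 / (1 - z) ^ 1) with (/ (1 - z)) by (simpl; field; lra).
    eapply ser_ext; [|apply is_series_geom; rewrite Rabs_pos_eq; lra].
    intros n; unfold ba; rewrite binom_n0; simpl; ring.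
  - apply rec_step; auto. rewrite Rabs_pos_eq; lra.
    assert (Hpos : forall s j, 0 <= ba s z j).
    { intros. unfold ba. apply Rmult_le_pos. apply pos_INR. apply pow_le; lra. }
    assert (Hrel := bsum_rel (ba s z) (ba (S s) z) z (ba_0 s z) (ba_rel s z)).
    assert (Hbd : forall N, sum_n (ba (S s) z) N <= z * Tf s z / (1 - z)).
    { intros [|N].
      - rewrite sum_O, ba_0. apply Rmult_le_pos. apply Rmult_le_pos. lra.
        unfold Tf. apply Rmult_le_pos. apply pow_le; lra. left; apply Rinv_0_lt_compat, pow_lt; lra.
        left; apply Rinv_0_lt_compat; lra.
      - assert (HA := partial_le _ _ N (Hpos s) IHs).
        assert (HB : sum_n (ba (S s) z) N <= sum_n (ba (S s) z) (S N)).
        { rewrite sum_Sn. unfold plus; simpl. specialize (Hpos (S s) (S N)). lra. }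
        rewrite Hrel in *.
        apply (Rmult_le_reg_r (1 - z)). lra.
        replace (z * Tf s z / (1 - z) * (1 - z)) with (z * Tf s z) by (field; lra).
        assert (sum_n (ba s z) N * (1 - z) + sum_n (ba (S s) z) N * (1 - z) <= Tf s z) by nra.
        nra. }
    assert (Hinc : forall n, sum_n (ba (S s) z) n <= sum_n (ba (S s) z) (S n)).
    { intros n. rewrite sum_Sn. change (plus ?x ?y) with (x + y). specialize (Hpos (S s) (S n)). lra. }
    destruct (ex_finite_lim_seq_incr _ _ Hinc Hbd) as [l Hl].
    exists l. apply ser_iff. auto.
Qed.

Lemma T_gen s x : Rabs x < 1 -> is_series (ba s x) (Tf s x).
Proof.
  intros Hx. induction s.
  - unfold Tf. replace (x ^ 0 / (1 - x) ^ 1) with (/ (1 - x)); [|apply Rabs_lt_between in Hx; simpl; field; lra].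
    eapply ser_ext; [|apply is_series_geom; auto].
    intros n; unfold ba; rewrite binom_n0; simpl; ring.
  - apply rec_step; auto. apply ex_series_Rabs.
    exists (Tf (S s) (Rabs x)). eapply ser_ext; [|apply T_nonneg; split; [apply Rabs_pos|auto]].
    intros n. unfold ba. rewrite Rabs_mult, <- RPow_abs, (Rabs_pos_eq (INR _)) by apply pos_INR. auto.
Qed.


Lemma neg_pow_even k x : (- x) ^ (2 * k) = x ^ (2 * k).
Proof. rewrite !pow_mult. f_equal. ring. Qed.
Lemma neg_pow_odd k x : (- x) ^ (2 * k + 1) = - x ^ (2 * k + 1).
Proof. rewrite !pow_add, neg_pow_even. ring. Qed.

Definition Ef s x := (Tf s x + Tf s (- x)) / 2.
Definition Of s x := (Tf s x - Tf s (- x)) / 2.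

Lemma E_ser s x : Rabs x < 1 -> is_series (fun k => INR (binom (2 * k) s) * x ^ (2 * k)) (Ef s x).
Proof.
  intros Hx. assert (Hx' : Rabs (- x) < 1) by (rewrite Rabs_Ropp; auto).
  pose proof (ser_scal (/2) _ _ (ser_plus _ _ _ _ (T_gen s x Hx) (T_gen s (-x) Hx'))) as H.
  replace (Ef s x) with (/ 2 * (Tf s x + Tf s (- x))) by (unfold Ef; field).
  eapply ser_ext; [|apply ser_even; [|exact H]].
  - intros k. cbv beta. unfold ba. rewrite neg_pow_even. field.
  - intros k. cbv beta. unfold ba. rewrite neg_pow_odd. ring.
Qed.

Lemma O_ser s x : Rabs x < 1 -> is_series (fun k => INR (binom (2 * k + 1) s) * x ^ (2 * k + 1)) (Of s x).
Proof.
  intros Hx. assert (Hx' : Rabs (- x) < 1) by (rewrite Rabs_Ropp; auto).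
  pose proof (ser_scal (/2) _ _ (ser_minus _ _ _ _ (T_gen s x Hx) (T_gen s (-x) Hx'))) as H.
  replace (Of s x) with (/ 2 * (Tf s x - Tf s (- x))) by (unfold Of; field).
  eapply ser_ext; [|apply ser_odd; [| |exact H]].
  - intros k. cbv beta. unfold ba. rewrite neg_pow_odd. field.
  - cbv beta. unfold ba. simpl. ring.
  - intros k. cbv beta. unfold ba. replace (2 * k + 2)%nat with (2 * (k + 1))%nat by lia. rewrite neg_pow_even. ring.
Qed.


Definition atanh x := ln ((1 + x) / (1 - x)) / 2.

Lemma atanh_deriv t : -1 < t < 1 -> is_derive atanh t (/ (1 - t ^ 2)).
Proof.
  intros Ht. unfold atanh. auto_derive.
  - repeat split; try lra. apply Rdiv_lt_0_compat; lra.
  - field. repeat split; try lra. intro H. nra.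
Qed.

Lemma term_deriv k t : is_derive (fun t => t ^ (2 * k + 1) / INR (2 * k + 1)) t (t ^ (2 * k)).
Proof.
  auto_derive; auto. replace (Init.Nat.pred (k + (k + 0) + 1)) with (2 * k)%nat by lia.
  assert (INR (k + (k + 0) + 1) <> 0) by (rewrite plus_INR; simpl; pose proof (pos_INR (k + (k + 0))); lra).
  field; auto.
Qed.

Definition psum N t := sum_n (fun k => t ^ (2 * k + 1) / INR (2 * k + 1)) N.

Lemma psum_deriv N t : is_derive (psum N) t (sum_n (fun k => t ^ (2 * k)) N).
Proof.
  induction N.
  - unfold psum. rewrite sum_O. eapply is_derive_ext; [|apply term_deriv].
    intros; rewrite sum_O; auto.
  - rewrite sum_Sn.
    apply (is_derive_ext (fun u => plus (psum N u) (u ^ (2 * S N + 1) / INR (2 * S N + 1)))).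
    + intros u. unfold psum. rewrite sum_Sn. reflexivity.
    + apply (is_derive_plus _ _ _ _ _ IHN (term_deriv (S N) t)).
Qed.

Lemma geom2 N t : sum_n (fun k => t ^ (2 * k)) N * (1 - t ^ 2) = 1 - t ^ (2 * N + 2).
Proof.
  induction N.
  - rewrite sum_O. simpl. ring.
  - rewrite sum_Sn. change (plus ?x ?y) with (x + y).
    rewrite Rmult_plus_distr_r, IHN.
    replace (2 * S N + 2)%nat with (2 * S N + 2)%nat by lia.
    replace (2 * N + 2)%nat with (2 * S N)%nat by lia.
    rewrite pow_add. simpl (t ^ 2). ring.
Qed.

Lemma psum_0 N : psum N 0 = 0.
Proof. unfold psum. induction N; [rewrite sum_O | rewrite sum_Sn, IHN];
  rewrite Nat.add_1_r; cbn [pow]; unfold Rdiv; rewrite !Rmult_0_l; try reflexivity.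
  change (plus ?x ?y) with (x + y). apply Rplus_0_r. Qed.

Lemma D_bound N x : 0 <= x < 1 ->
  0 <= atanh x - psum N x <= x ^ 3 / (1 - x ^ 2) * (x ^ 2) ^ N.
Proof.
  intros Hx.
  set (D := fun t => atanh t - psum N t).
  set (dD := fun t => / (1 - t ^ 2) - sum_n (fun k => t ^ (2 * k)) N).
  assert (HD : forall t, -1 < t < 1 -> is_derive D t (dD t)).
  { intros t Ht. apply (is_derive_minus atanh (psum N) t _ _ (atanh_deriv t Ht) (psum_deriv N t)). }
  destruct (MVT_gen D 0 x dD) as [c [Hc Heq]].
  - intros t Ht. rewrite Rmin_left, Rmax_right in Ht by lra. apply HD. lra.
  - intros t Ht. rewrite Rmin_left, Rmax_right in Ht by lra. apply continuity_pt_filterlim.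
    assert (Hct : continuous D t) by (apply (ex_derive_continuous (K := R_AbsRing) (V := R_NormedModule)); eexists; apply HD; lra).
    exact Hct.
  - rewrite Rmin_left, Rmax_right in Hc by lra.
    assert (HD0 : D 0 = 0).
    { unfold D, atanh. rewrite psum_0. replace ((1 + 0) / (1 - 0)) with 1 by field. rewrite ln_1. field. }
    assert (Hc2 : 1 - c ^ 2 > 0) by nra.
    assert (HdD : dD c = c ^ (2 * N + 2) / (1 - c ^ 2)).
    { unfold dD. 
      assert (Hgen : forall G : R, G * (1 - c ^ 2) = 1 - c ^ (2 * N + 2) -> / (1 - c ^ 2) - G = c ^ (2 * N + 2) / (1 - c ^ 2)).
      { intros G HG. assert (G = (1 - c ^ (2 * N + 2)) / (1 - c ^ 2)) by (rewrite <- HG; field; lra).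
        subst G. field; lra. }
      apply Hgen. apply geom2. }
    assert (Hxc : c ^ (2 * N + 2) <= x ^ (2 * N + 2)) by (apply pow_incr; lra).
    assert (Hp : 0 <= c ^ (2 * N + 2)) by (apply pow_le; lra).
    assert (Hx2 : 1 - x ^ 2 > 0) by nra.
    assert (Hinv : / (1 - c ^ 2) <= / (1 - x ^ 2)).
    { apply Rinv_le_contravar; nra. }
    fold (D x). rewrite HD0, !Rminus_0_r, HdD in Heq. rewrite Heq.
    replace (x ^ 3 / (1 - x ^ 2) * (x ^ 2) ^ N) with (x ^ (2 * N + 2) * / (1 - x ^ 2) * x).
    2:{ rewrite <- pow_mult. replace (2 * N + 2)%nat with (2 * N + 2)%nat by lia.
        rewrite (Nat.mul_comm 2 N). replace (N * 2 + 2)%nat with (N * 2 + 2)%nat by lia.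
        rewrite pow_add. simpl. field. lra. }
    unfold Rdiv. split.
    + apply Rmult_le_pos; [apply Rmult_le_pos|]; try lra. left; apply Rinv_0_lt_compat; lra.
    + apply Rmult_le_compat_r; [lra|]. apply Rmult_le_compat; try lra. left; apply Rinv_0_lt_compat; lra.
Qed.

Lemma atanh_ser x : 0 <= x < 1 -> is_series (fun k => x ^ (2 * k + 1) / INR (2 * k + 1)) (atanh x).
Proof.
  intros Hx. apply ser_iff.
  apply (is_lim_seq_le_le (fun N => atanh x - x ^ 3 / (1 - x ^ 2) * (x ^ 2) ^ N) _ (fun _ => atanh x)).
  - intros N. pose proof (D_bound N x Hx). unfold psum in H. lra.
  - replace (Finite (atanh x)) with (Finite (atanh x - x ^ 3 / (1 - x ^ 2) * 0)) by (f_equal; ring).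
    apply is_lim_seq_minus'. apply is_lim_seq_const.
    apply (is_lim_seq_scal_l _ (x ^ 3 / (1 - x ^ 2)) 0). apply is_lim_seq_geom.
    rewrite Rabs_pos_eq; nra.
  - apply is_lim_seq_const.
Qed.


Lemma alg_id (a pp A B B1 C1 C2 x sg X : R) : 0 <= a -> 0 <= pp -> x <> 0 ->
  C2 * (pp + 2) = (2 * a + 2) * B1 -> C1 * (pp + 2) = (2 * a + 1) * B ->
  B1 * (pp + 1) = (2 * a + 1) * A -> C2 = B1 + C1 ->
  (X * x ^ 2) * C2 / ((2 * a + 1) * (2 * a + 2) * (2 * a + 3)) =
  / 2 * ( x ^ 2 * (B * X) / (pp + 2) + x ^ 2 * (A * X) / (pp + 1) - 2 * x * (B1 * (X * x)) / (pp + 2)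
        + (X * x ^ 2) * ((C2 - sg) / (2 * a + 3)) + sg * ((X * x ^ 3) / (2 * a + 3)) / x).
Proof.
  intros Ha Hp Hx R1 R2 R3 R4.
  assert (HB1 : B1 = C2 * (pp + 2) / (2 * a + 2)) by (rewrite R1; field; lra).
  assert (HC1 : C1 = C2 - B1) by lra.
  assert (HB : B = C1 * (pp + 2) / (2 * a + 1)) by (rewrite R2; field; lra).
  assert (HA : A = B1 * (pp + 1) / (2 * a + 1)) by (rewrite R3; field; lra).
  subst A B. subst C1. subst B1. field. repeat split; lra.
Qed.

Lemma H_rec N r : (INR (binom N (S r)) - (-1) ^ (S r)) / (INR N + 1) =
  INR (binom N r) / INR (S r) - (INR (binom N r) - (-1) ^ r) / (INR N + 1).
Proof.
  pose proof (binom_mulR N r) as H. rewrite binom_SS, plus_INR in H.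
  rewrite !S_INR in *. pose proof (pos_INR N). pose proof (pos_INR r).
  assert (E : INR (binom N (S r)) = ((INR N + 1) * INR (binom N r) - INR (binom N r) * (INR r + 1)) / (INR r + 1))
    by (rewrite <- H; field; lra).
  rewrite E. simpl pow. field. lra.
Qed.

Definition Hr N r := (INR (binom N r) - (-1) ^ r) / (INR N + 1).

Definition Gt N q := INR (binom N (2 * q + 1)) / INR (2 * q + 2) - INR (binom N (2 * q)) / INR (2 * q + 1).
Definition Gsum m N := sum_n_m (Gt N) 0 m.

Lemma Hr_step N q : Hr N (2 * q + 2) = Gt N q + Hr N (2 * q).
Proof.
  unfold Hr, Gt. replace (2 * q + 2)%nat with (S (S (2 * q))) by lia.
  rewrite H_rec, H_rec. replace (2 * q + 1)%nat with (S (2 * q)) by lia.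
  replace (S (S (2 * q))) with (S (S (2 * q))) by lia. ring.
Qed.

Lemma Hr_0 N : Hr N 0 = 0.
Proof. unfold Hr. rewrite binom_n0. simpl. unfold Rdiv. ring. Qed.

Lemma H_even N m : Hr N (2 * m + 2) = Gsum m N.
Proof.
  unfold Gsum. induction m.
  - rewrite sum_n_n, Hr_step, Hr_0. ring.
  - rewrite sum_n_Sm by lia. replace (2 * S m + 2)%nat with (2 * (S m) + 2)%nat by lia.
    rewrite Hr_step. replace (2 * S m)%nat with (2 * m + 2)%nat by lia. rewrite IHm.
    change (plus ?x ?y) with (x + y). ring.
Qed.

Lemma H_odd N m : Hr N (2 * m + 3) = INR (binom N (2 * m + 2)) / INR (2 * m + 3) - Gsum m N.
Proof.
  rewrite <- H_even. unfold Hr. replace (2 * m + 3)%nat with (S (2 * m + 2)) by lia.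
  rewrite H_rec. reflexivity.
Qed.


Lemma ser_ext_val (a b : nat -> R) (l l' : R) : (forall n, a n = b n) -> l = l' -> is_series a l -> is_series b l'.
Proof. intros H1 H2 H3. subst l'. eapply ser_ext; eauto. Qed.

Definition tx x p k := x ^ (2 * k + 2) * INR (binom (2 * k + 2) (p + 2)) /
  (INR (2 * k + 1) * INR (2 * k + 2) * INR (2 * k + 3)).

Lemma INR_lin a b k : INR (a * k + b) = INR a * INR k + INR b.
Proof. rewrite plus_INR, mult_INR. reflexivity. Qed.

Lemma INR_2k c k : INR (2 * k + c) = 2 * INR k + INR c.
Proof. rewrite plus_INR, mult_INR. simpl (INR 2). ring. Qed.
Lemma INR_pc p c : INR (p + c) = INR p + INR c.
Proof. apply plus_INR. Qed.
Lemma INR2 : INR 2 = 2. Proof. simpl; ring. Qed.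
Lemma INR3 : INR 3 = 3. Proof. simpl; ring. Qed.

Lemma main_gen p x (Hv : R) : 0 < x < 1 ->
  is_series (fun k => x ^ (2 * k + 2) * Hr (2 * k + 2) (p + 2)) Hv ->
  is_series (tx x p) (/ 2 * (x ^ 2 * Ef (p + 1) x / INR (p + 2) + x ^ 2 * Ef p x / INR (p + 1)
     - 2 * x * Of (p + 1) x / INR (p + 2) + Hv + (-1) ^ p * ((atanh x - x) / x))).
Proof.
  intros Hx HH.
  assert (Hax : Rabs x < 1) by (rewrite Rabs_pos_eq; lra).
  pose proof (ser_scal (x ^ 2 / INR (p + 2)) _ _ (E_ser (p + 1) x Hax)) as s1.
  pose proof (ser_scal (x ^ 2 / INR (p + 1)) _ _ (E_ser p x Hax)) as s2.
  pose proof (ser_scal (2 * x / INR (p + 2)) _ _ (O_ser (p + 1) x Hax)) as s3.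
  pose proof (ser_scal ((-1) ^ p / x) _ _ (ser_shift _ _ (atanh_ser x ltac:(lra)))) as s5.
  pose proof (ser_scal (/ 2) _ _ (ser_plus _ _ _ _ (ser_plus _ _ _ _ (ser_minus _ _ _ _ (ser_plus _ _ _ _ s1 s2) s3) HH) s5)) as Sall.
  eapply ser_ext_val; [| |exact Sall].
  - intros k. cbv beta. unfold tx, Hr.
    pose proof (binom_mulR (2 * k + 1) (p + 1)) as R1.
    pose proof (binom_mulR (2 * k) (p + 1)) as R2.
    pose proof (binom_mulR (2 * k) p) as R3.
    pose proof (binom_SS (2 * k + 1) (p + 1)) as R4.
    replace (S (2 * k + 1)) with (2 * k + 2)%nat in R1, R4 by lia.
    replace (S (p + 1)) with (p + 2)%nat in R1, R2, R4 by lia.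
    replace (S (2 * k)) with (2 * k + 1)%nat in R2, R3 by lia.
    replace (S p) with (p + 1)%nat in R3 by lia.
    apply (f_equal INR) in R4. rewrite plus_INR in R4.
    replace (2 * S k + 1)%nat with (2 * k + 3)%nat by lia.
    rewrite ?S_INR in R1, R2, R3.
    rewrite ?INR_2k, ?INR_pc, ?INR_1, ?INR2, ?INR3 in R1.
    rewrite ?INR_2k, ?INR_pc, ?INR_1, ?INR2, ?INR3 in R2.
    rewrite ?INR_2k, ?INR_pc, ?INR_1, ?INR2, ?INR3 in R3.
    rewrite ?INR_2k, ?INR_pc, ?INR_1, ?INR2, ?INR3.
    rewrite (pow_add x (2 * k) 1), (pow_add x (2 * k) 2), (pow_add x (2 * k) 3).
    replace ((-1) ^ (p + 2)) with ((-1) ^ p) by (rewrite pow_add; simpl; ring).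
    pose proof (pos_INR k). pose proof (pos_INR p).
    remember (INR (binom (2 * k + 2) (p + 2))) as C2.
    remember (INR (binom (2 * k + 1) (p + 2))) as C1.
    remember (INR (binom (2 * k + 1) (p + 1))) as B1.
    remember (INR (binom (2 * k) (p + 1))) as B.
    remember (INR (binom (2 * k) p)) as A.
    clear HeqC2 HeqC1 HeqB1 HeqB HeqA.
    assert (HB1 : B1 = C2 * (INR p + 2) / (2 * INR k + 2)).
    { apply (Rmult_eq_reg_l (2 * INR k + 2)); [|lra]. rewrite <- R1. field. lra. }
    assert (HC1 : C1 = C2 - B1) by lra.
    assert (HBB : B = C1 * (INR p + 2) / (2 * INR k + 1)).
    { apply (Rmult_eq_reg_l (2 * INR k + 1)); [|lra]. rewrite <- R2. field. lra. }
    assert (HA : A = B1 * (INR p + 1) / (2 * INR k + 1)).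
    { apply (Rmult_eq_reg_l (2 * INR k + 1)); [|lra]. rewrite <- R3. field. lra. }
    rewrite HA, HBB, HC1. rewrite HB1. field. repeat split; lra.
  - replace ((fun k : nat => x ^ (2 * k + 1) / INR (2 * k + 1)) 0%nat) with x by (simpl; field).
    pose proof (pos_INR p). rewrite !INR_pc, INR_1, INR2. replace (x ^ (2 * 0 + 1) / (INR (2 * 0) + 1)) with x by (simpl; field). f_equal. field. repeat split; lra.
Qed.


Lemma shiftE s x : Rabs x < 1 ->
  is_series (fun k => INR (binom (2 * k + 2) s) * x ^ (2 * k + 2)) (Ef s x - INR (binom 0 s)).
Proof.
  intros Hx. pose proof (ser_shift _ _ (E_ser s x Hx)) as H.
  eapply ser_ext_val; [| |exact H].
  - intros k. cbv beta. replace (2 * S k)%nat with (2 * k + 2)%nat by lia. reflexivity.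
  - cbv beta. simpl. ring.
Qed.

Definition GE m x := sum_n_m (fun q => Ef (2 * q + 1) x / INR (2 * q + 2) - Ef (2 * q) x / INR (2 * q + 1)) 0 m.

Lemma const_sum m : sum_n_m (fun q => INR (binom 0 (2 * q)) / INR (2 * q + 1) - INR (binom 0 (2 * q + 1)) / INR (2 * q + 2)) 0 m = 1.
Proof.
  induction m.
  - rewrite sum_n_n. simpl. field.
  - rewrite sum_n_Sm by lia. rewrite IHm. replace (2 * S m)%nat with (S (2 * m + 1)) by lia.
    replace (2 * S m + 1)%nat with (S (2 * m + 2)) by lia. rewrite !binom_0S.
    change (plus ?a ?b) with (a + b). simpl INR. match goal with |- ?a = ?b => change (@eq R a b) end. unfold Rdiv. ring.
Qed.

Lemma Gser m x : Rabs x < 1 ->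
  is_series (fun k => x ^ (2 * k + 2) * Gsum m (2 * k + 2)) (GE m x + 1).
Proof.
  intros Hx.
  assert (Hq : forall q, is_series (fun k => x ^ (2 * k + 2) * Gt (2 * k + 2) q)
     ((Ef (2 * q + 1) x - INR (binom 0 (2 * q + 1))) / INR (2 * q + 2) - (Ef (2 * q) x - INR (binom 0 (2 * q))) / INR (2 * q + 1))).
  { intros q. eapply ser_ext_val; [| |apply (ser_minus _ _ _ _ (ser_scal (/ INR (2 * q + 2)) _ _ (shiftE (2 * q + 1) x Hx)) (ser_scal (/ INR (2 * q + 1)) _ _ (shiftE (2 * q) x Hx)))].
    - intros k. cbv beta. unfold Gt. unfold Rdiv. ring.
    - unfold Rdiv. ring. }
  pose proof (ser_sum_n_m _ _ 0 m Hq) as H.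
  eapply ser_ext_val; [| |exact H].
  - intros k. cbv beta. unfold Gsum. rewrite <- (sum_n_m_mult_l (K := R_Ring)). reflexivity.
  - unfold GE. rewrite <- (const_sum m). rewrite <- (sum_n_m_plus (G := R_AbelianMonoid)).
    apply sum_n_m_ext. intros q. change (plus ?a ?b) with (a + b). unfold Rdiv. match goal with |- ?a = ?b => change (@eq R a b) end. ring.
Qed.

Lemma main_even m x : 0 < x < 1 ->
  is_series (tx x (2 * m)) (/ 2 * (x ^ 2 * Ef (2 * m + 1) x / INR (2 * m + 2) + x ^ 2 * Ef (2 * m) x / INR (2 * m + 1)
     - 2 * x * Of (2 * m + 1) x / INR (2 * m + 2) + (GE m x + 1) + ((atanh x - x) / x))).
Proof.
  intros Hx. assert (Hax : Rabs x < 1) by (rewrite Rabs_pos_eq; lra).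
  pose proof (main_gen (2 * m) x (GE m x + 1) Hx) as H.
  replace ((-1) ^ (2 * m)) with 1 in H by (rewrite pow_mult; replace ((-1) ^ 2) with 1 by ring; rewrite pow1; ring).
  rewrite Rmult_1_l in H. replace (2 * m + 2)%nat with (2 * m + 2)%nat in H by lia.
  apply H. eapply ser_ext; [|apply Gser; auto].
  intros k. cbv beta. rewrite <- H_even. reflexivity.
Qed.

Lemma main_odd m x : 0 < x < 1 ->
  is_series (tx x (2 * m + 1)) (/ 2 * (x ^ 2 * Ef (2 * m + 2) x / INR (2 * m + 3) + x ^ 2 * Ef (2 * m + 1) x / INR (2 * m + 2)
     - 2 * x * Of (2 * m + 2) x / INR (2 * m + 3) + (Ef (2 * m + 2) x / INR (2 * m + 3) - (GE m x + 1)) - ((atanh x - x) / x))).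
Proof.
  intros Hx. assert (Hax : Rabs x < 1) by (rewrite Rabs_pos_eq; lra).
  pose proof (main_gen (2 * m + 1) x (Ef (2 * m + 2) x / INR (2 * m + 3) - (GE m x + 1)) Hx) as H.
  replace ((-1) ^ (2 * m + 1)) with (-1) in H by (rewrite pow_add, pow_mult; replace ((-1) ^ 2) with 1 by ring; rewrite pow1; ring).
  replace (2 * m + 1 + 1)%nat with (2 * m + 2)%nat in H by lia.
  replace (2 * m + 1 + 2)%nat with (2 * m + 3)%nat in H by lia.
  eapply ser_ext_val; [| |apply H].
  - reflexivity.
  - ring.
  - replace (Ef (2 * m + 2) x / INR (2 * m + 3) - (GE m x + 1)) with
      ((Ef (2 * m + 2) x - INR (binom 0 (2 * m + 2))) / INR (2 * m + 3) - (GE m x + 1)).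
    2:{ replace (2 * m + 2)%nat with (S (2 * m + 1)) by lia. rewrite binom_0S. simpl INR. unfold Rdiv. ring. }
    pose proof (ser_minus _ _ _ _ (ser_scal (/ INR (2 * m + 3)) _ _ (shiftE (2 * m + 2) x Hax)) (Gser m x Hax)) as G.
    eapply ser_ext_val; [| |exact G].
    + intros k. cbv beta. rewrite H_odd. unfold Rdiv. ring.
    + unfold Rdiv. ring.
Qed.


Lemma s5_pos : 0 < sqrt 5.
Proof. apply sqrt_lt_R0. lra. Qed.
Lemma s5_sq : sqrt 5 * sqrt 5 = 5.
Proof. apply sqrt_sqrt. lra. Qed.
Lemma s5_gt2 : 2 < sqrt 5.
Proof. rewrite <- (sqrt_square 2) by lra. apply sqrt_lt_1; lra. Qed.

Lemma ab_diff : alpha - beta = sqrt 5.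
Proof. unfold alpha, beta. field. Qed.
Lemma ab_prod : alpha * beta = -1.
Proof. unfold alpha, beta. pose proof s5_sq. nra. Qed.
Lemma alpha_gt1 : 1 < alpha.
Proof. unfold alpha. pose proof s5_gt2. lra. Qed.

Lemma beta_pow n : Nat.Even n -> beta ^ n = / alpha ^ n.
Proof.
  intros [h ->]. assert (alpha ^ (2 * h) <> 0) by (apply pow_nonzero; pose proof alpha_gt1; lra).
  apply (Rmult_eq_reg_l (alpha ^ (2 * h))); auto. rewrite Rinv_r by auto.
  rewrite <- Rpow_mult_distr, ab_prod, pow_mult. replace ((-1) ^ 2) with 1 by ring. apply pow1.
Qed.

Lemma Fib_nj n j : Nat.Even n -> Fib (n * j) = ((alpha ^ n) ^ j - / (alpha ^ n) ^ j) / sqrt 5.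
Proof.
  intros He. unfold Fib. rewrite ab_diff, !pow_mult, beta_pow, pow_inv by auto. reflexivity.
Qed.

Lemma Luc_nj n j : Nat.Even n -> Luc (n * j) = (alpha ^ n) ^ j + / (alpha ^ n) ^ j.
Proof.
  intros He. unfold Luc. rewrite !pow_mult, beta_pow, pow_inv by auto. reflexivity.
Qed.

Lemma Fib_n n : Nat.Even n -> Fib n = (alpha ^ n - / alpha ^ n) / sqrt 5.
Proof. intros He. rewrite <- (Nat.mul_1_r n) at 1. rewrite Fib_nj by auto. rewrite !pow_1. reflexivity. Qed.
Lemma Luc_n n : Nat.Even n -> Luc n = alpha ^ n + / alpha ^ n.
Proof. intros He. rewrite <- (Nat.mul_1_r n) at 1. rewrite Luc_nj by auto. rewrite !pow_1. reflexivity. Qed.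

Lemma Tf_S s x : x <> 1 -> Tf (S s) x = Tf s x * (x / (1 - x)).
Proof. intros. assert (1 - x <> 0) by lra. unfold Tf. simpl. field. split; auto. apply pow_nonzero; auto. Qed.

Lemma Tf_closed s u : 1 < u ->
  Tf s ((u - / u) / (u + / u)) = (u - / u) ^ s * (u + / u) * u ^ (S s) / 2 ^ (S s) /\
  Tf s (- ((u - / u) / (u + / u))) = (- (u - / u)) ^ s * (u + / u) / (2 ^ (S s) * u ^ (S s)).
Proof.
  intros Hu. assert (Hi : 0 < / u) by (apply Rinv_0_lt_compat; lra).
  assert (HQ : u + / u <> 0) by lra.
  assert (Hx1 : (u - / u) / (u + / u) <> 1).
  { intro H. unfold Rdiv in H. apply (f_equal (fun t => t * (u + / u))) in H. cbv beta in H.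
    rewrite Rmult_assoc, Rinv_l, Rmult_1_r in H by auto. lra. }
  assert (Hx2 : - ((u - / u) / (u + / u)) <> 1).
  { intro H. unfold Rdiv in H. apply (f_equal (fun t => t * (u + / u))) in H. cbv beta in H.
    rewrite Ropp_mult_distr_l_reverse, Rmult_assoc, Rinv_l, Rmult_1_r in H by auto. lra. }
  induction s.
  - unfold Tf. simpl. split; field; repeat split; try lra; nra.
  - destruct IHs as [I1 I2]. rewrite !Tf_S by auto. rewrite I1, I2.
    split; simpl; field; repeat split; try lra; try (apply pow_nonzero; lra); try nra.
Qed.


Definition xx n := (alpha ^ n - / alpha ^ n) / (alpha ^ n + / alpha ^ n).

Lemma Rdiv_pow a b k : (a / b) ^ k = a ^ k / b ^ k.
Proof. unfold Rdiv. rewrite Rpow_mult_distr, pow_inv. reflexivity. Qed.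

Lemma s5_pow2 t : sqrt 5 ^ (2 * t) = 5 ^ t.
Proof. rewrite pow_mult. f_equal. simpl. rewrite Rmult_1_r. apply s5_sq. Qed.

Lemma Ef_closed s u : 1 < u ->
  Ef s ((u - / u) / (u + / u)) = ((u - / u) ^ s * (u + / u) * u ^ (S s) / 2 ^ (S s) + (- (u - / u)) ^ s * (u + / u) / (2 ^ (S s) * u ^ (S s))) / 2.
Proof. intros Hu. unfold Ef. destruct (Tf_closed s u Hu) as [-> ->]. reflexivity. Qed.
Lemma Of_closed s u : 1 < u ->
  Of s ((u - / u) / (u + / u)) = ((u - / u) ^ s * (u + / u) * u ^ (S s) / 2 ^ (S s) - (- (u - / u)) ^ s * (u + / u) / (2 ^ (S s) * u ^ (S s))) / 2.
Proof. intros Hu. unfold Of. destruct (Tf_closed s u Hu) as [-> ->]. reflexivity. Qed.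

Lemma u_gt1 n : (0 < n)%nat -> 1 < alpha ^ n.
Proof. intros. apply Rlt_pow_R1; auto. apply alpha_gt1. Qed.

Lemma P_pos u : 1 < u -> 0 < u - / u.
Proof. intros. assert (/ u < 1) by (rewrite <- Rinv_1; apply Rinv_lt_contravar; lra). lra. Qed.
Lemma Q_pos u : 1 < u -> 0 < u + / u.
Proof. intros. assert (0 < / u) by (apply Rinv_0_lt_compat; lra). lra. Qed.

Ltac prep n t :=
  let Hu := fresh "Hu" in
  pose proof (u_gt1 n ltac:(assumption)) as Hu;
  pose proof (P_pos _ Hu); pose proof (Q_pos _ Hu);
  pose proof s5_pos; pose proof (pos_INR t);
  assert (0 < (alpha ^ n - / alpha ^ n) ^ (2 * t)) by (apply pow_lt; auto);
  assert (0 < (alpha ^ n) ^ (2 * t)) by (apply pow_lt; lra);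
  assert (0 < (alpha ^ n + / alpha ^ n) ^ (2 * t)) by (apply pow_lt; lra);
  assert (0 < 2 ^ (2 * t)) by (apply pow_lt; lra);
  assert (0 < 5 ^ t) by (apply pow_lt; lra);
  assert (0 < (alpha ^ n) ^ t) by (apply pow_lt; lra);
  assert (0 < 2 ^ t) by (apply pow_lt; lra);
  assert (0 < (alpha ^ n - / alpha ^ n) ^ t) by (apply pow_lt; auto);
  set (u := alpha ^ n) in *;
  set (s5 := sqrt 5) in *;
  set (Pt := (u - / u) ^ (2 * t)) in *;
  set (Ut := u ^ (2 * t)) in *;
  set (Tt := 2 ^ (2 * t)) in *;
  set (Vt := 5 ^ t) in *;
  set (P1 := (u - / u) ^ t) in *;
  set (U1 := u ^ t) in *;
  set (T1 := 2 ^ t) in *.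

Ltac fin s5 :=
  rewrite ?INR_2k, ?INR_pc, ?INR2, ?INR_1, ?INR3;
  cbn [pow];
  replace 5 with (s5 * s5) by exact s5_sq;
  field; repeat split; try lra; try (intro; nra).

Lemma g1_match n t : Nat.Even n -> (0 < n)%nat ->
  Luc n / (4 * Fib n) * (5 ^ (t + 1) / INR (2 * t + 2) * (Fib n ^ (2 * t + 2) / 2 ^ (2 * t + 2)) * Fib (n * (2 * t + 2)))
  = / 2 * (Ef (2 * t + 1) (xx n) / INR (2 * t + 2)).
Proof.
  intros He Hn. unfold xx. pose proof (u_gt1 n Hn) as Hu.
  rewrite Ef_closed by auto. rewrite Fib_nj, Luc_n, Fib_n by auto.
  replace (S (2 * t + 1)) with (2 * t + 2)%nat by lia.
  rewrite neg_pow_odd.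
  rewrite !Rdiv_pow. rewrite !pow_add. rewrite ?s5_pow2.
  prep n t. fin s5.
Qed.

Lemma g2_match n t : Nat.Even n -> (0 < n)%nat ->
  Luc n / (4 * Fib n) * (5 ^ t / INR (2 * t + 1) * (Fib n ^ (2 * t + 1) / 2 ^ (2 * t + 1)) * Luc (n * (2 * t + 1)))
  = / 2 * (Ef (2 * t) (xx n) / INR (2 * t + 1)).
Proof.
  intros He Hn. unfold xx. pose proof (u_gt1 n Hn) as Hu.
  rewrite Ef_closed by auto. rewrite Luc_nj, Luc_n, Fib_n by auto.
  replace (S (2 * t)) with (2 * t + 1)%nat by lia.
  rewrite neg_pow_even.
  rewrite !Rdiv_pow. rewrite !pow_add. rewrite ?s5_pow2.
  prep n t. fin s5.
Qed.

Lemma term_tx n r k : Nat.Even n -> (0 < n)%nat -> term n (r + 2) (S k) = tx (xx n) r k.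
Proof.
  intros He Hn. unfold term, tx, xx. rewrite Luc_n, Fib_n by auto.
  replace (2 * S k)%nat with (2 * k + 2)%nat by lia.
  replace (r + 2)%nat with (r + 2)%nat by lia.
  rewrite !S_INR. rewrite !Rdiv_pow. rewrite !pow_add. rewrite ?s5_pow2.
  replace (S k) with (k + 1)%nat by lia. rewrite pow_add.
  prep n k. remember (INR (binom (2 * k + 2) (r + 2))) as Bn. fin s5.
Qed.

Lemma atanh_val n : Nat.Even n -> (0 < n)%nat -> atanh (xx n) = INR n * ln alpha.
Proof.
  intros He Hn. pose proof (u_gt1 n Hn) as Hu. unfold atanh, xx.
  pose proof (Q_pos _ Hu).
  replace ((1 + (alpha ^ n - / alpha ^ n) / (alpha ^ n + / alpha ^ n)) /
     (1 - (alpha ^ n - / alpha ^ n) / (alpha ^ n + / alpha ^ n))) with ((alpha ^ n) ^ 2).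
  - rewrite ln_pow, ln_pow by (try apply pow_lt; pose proof alpha_gt1; lra). simpl INR. field.
  - field. repeat split; try lra. intro; nra.
Qed.

Lemma Lsc_even n q : Nat.Even n -> (0 < n)%nat ->
  / 2 * (xx n ^ 2 * Ef (2 * q + 1) (xx n) / INR (2 * q + 2) + xx n ^ 2 * Ef (2 * q) (xx n) / INR (2 * q + 1)
     - 2 * xx n * Of (2 * q + 1) (xx n) / INR (2 * q + 2)) =
  - (5 ^ S q / INR (S q) * (Fib n ^ (2 * S q) / 2 ^ (2 * S q + 2)) * Luc (2 * n * S q))
  + 1 / Luc n * (5 ^ (S q + 1) / INR (S q)) * (Fib n ^ (2 * S q + 1) / 2 ^ (2 * S q + 3)) * Fib (2 * n * S q)
  + 1 / Luc n * (5 ^ S q / INR (2 * S q - 1)) * (Fib n ^ (2 * S q) / 2 ^ (2 * S q + 1)) * Luc (n * (2 * S q - 1)).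
Proof.
  intros He Hn. pose proof (u_gt1 n Hn) as Hu.
  replace (2 * n * S q)%nat with (n * (2 * q + 2))%nat by lia.
  replace (2 * S q - 1)%nat with (2 * q + 1)%nat by lia.
  replace (2 * S q + 2)%nat with (2 * q + 4)%nat by lia.
  replace (2 * S q + 3)%nat with (2 * q + 5)%nat by lia.
  replace (2 * S q + 1)%nat with (2 * q + 3)%nat by lia.
  replace (2 * S q)%nat with (2 * q + 2)%nat by lia.
  replace (S q + 1)%nat with (q + 2)%nat by lia.
  replace (S q) with (q + 1)%nat by lia.
  unfold xx. rewrite !Ef_closed, !Of_closed by auto.
  rewrite Fib_nj, !Luc_nj, Luc_n, Fib_n by auto.
  replace (S (2 * q + 1)) with (2 * q + 2)%nat by lia.
  replace (S (2 * q)) with (2 * q + 1)%nat by lia.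
  rewrite neg_pow_even, neg_pow_odd.
  rewrite !Rdiv_pow. rewrite !pow_add. rewrite ?s5_pow2.
  prep n q. fin s5.
Qed.

Lemma Lsc_odd n q : Nat.Even n -> (0 < n)%nat ->
  / 2 * (xx n ^ 2 * Ef (2 * q + 2) (xx n) / INR (2 * q + 3) + xx n ^ 2 * Ef (2 * q + 1) (xx n) / INR (2 * q + 2)
     - 2 * xx n * Of (2 * q + 2) (xx n) / INR (2 * q + 3)) =
  - (5 ^ (S q + 1) / INR (2 * S q + 1) * (Fib n ^ (2 * S q + 1) / 2 ^ (2 * S q + 2)) * Fib (n * (2 * S q + 1)))
  + 1 / Luc n * (5 ^ (S q + 1) / INR (2 * S q + 1)) * (Fib n ^ (2 * S q + 2) / 2 ^ (2 * S q + 3)) * Luc (n * (2 * S q + 1))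
  + 1 / Luc n * (5 ^ (S q + 1) / INR (S q)) * (Fib n ^ (2 * S q + 1) / 2 ^ (2 * S q + 3)) * Fib (2 * S q * n).
Proof.
  intros He Hn. pose proof (u_gt1 n Hn) as Hu.
  replace (2 * S q * n)%nat with (n * (2 * q + 2))%nat by lia.
  replace (2 * S q + 2)%nat with (2 * q + 4)%nat by lia.
  replace (2 * S q + 3)%nat with (2 * q + 5)%nat by lia.
  replace (2 * S q + 1)%nat with (2 * q + 3)%nat by lia.
  replace (S q + 1)%nat with (q + 2)%nat by lia.
  replace (S q) with (q + 1)%nat by lia.
  unfold xx. rewrite !Ef_closed, !Of_closed by auto.
  rewrite !Fib_nj, !Luc_nj, Luc_n, Fib_n by auto.
  replace (S (2 * q + 1)) with (2 * q + 2)%nat by lia.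
  replace (S (2 * q + 2)) with (2 * q + 3)%nat by lia.
  rewrite neg_pow_odd.
  replace (2 * q + 2)%nat with (2 * (q + 1))%nat by lia.
  rewrite neg_pow_even. replace (2 * (q + 1))%nat with (2 * q + 2)%nat by lia.
  rewrite !Rdiv_pow. rewrite !pow_add. rewrite ?s5_pow2.
  prep n q. fin s5.
Qed.


Lemma sum_rev (f : nat -> R) M : sum_n_m (fun j => f (M - j)%nat) 0 M = sum_n_m f 0 M.
Proof.
  induction M.
  - rewrite !sum_n_n. reflexivity.
  - rewrite sum_Sn_m by lia. rewrite <- sum_n_m_S.
    rewrite (sum_n_m_ext (fun n0 => f (S M - S n0)%nat) (fun j => f (M - j)%nat)) by (intros; f_equal).
    rewrite IHM. rewrite sum_n_Sm by lia. replace (S M - 0)%nat with (S M) by lia.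
    change (plus ?a ?b) with (a + b). change (plus ?a ?b) with (a + b).
    match goal with |- ?a = ?b => change (@eq R a b) end. ring.
Qed.

Lemma sum_rev1 (f : nat -> R) M : sum_n_m (fun j => f (S M - j)%nat) 1 (S M) = sum_n_m f 0 M.
Proof.
  rewrite <- sum_n_m_S. rewrite <- (sum_rev f M). apply sum_n_m_ext. intros; reflexivity.
Qed.

Definition g1b n t := 5 ^ (t + 1) / INR (2 * t + 2) * (Fib n ^ (2 * t + 2) / 2 ^ (2 * t + 2)) * Fib (n * (2 * t + 2)).
Definition g2b n t := 5 ^ t / INR (2 * t + 1) * (Fib n ^ (2 * t + 1) / 2 ^ (2 * t + 1)) * Luc (n * (2 * t + 1)).
Definition GE1 q x := sum_n_m (fun t => Ef (2 * t + 1) x / INR (2 * t + 2)) 0 q.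
Definition GE2 q x := sum_n_m (fun t => Ef (2 * t) x / INR (2 * t + 1)) 0 q.

Lemma GE_split q x : GE q x = GE1 q x - GE2 q x.
Proof.
  unfold GE, GE1, GE2. induction q.
  - rewrite !sum_n_n. reflexivity.
  - rewrite !sum_n_Sm by lia. rewrite IHq. change (plus ?a ?b) with (a + b).
    change (plus ?a ?b) with (a + b). change (plus ?a ?b) with (a + b).
    match goal with |- ?a = ?b => change (@eq R a b) end. ring.
Qed.

Lemma S1 n q : Nat.Even n -> (0 < n)%nat -> Luc n / (4 * Fib n) * sum_n_m (g1b n) 0 q = / 2 * GE1 q (xx n).
Proof.
  intros. unfold GE1. rewrite <- (sum_n_m_mult_l (K := R_Ring)), <- (sum_n_m_mult_l (K := R_Ring)).
  apply sum_n_m_ext. intros t. unfold g1b. apply g1_match; auto.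
Qed.

Lemma S2 n q : Nat.Even n -> (0 < n)%nat -> Luc n / (4 * Fib n) * sum_n_m (g2b n) 0 q = / 2 * GE2 q (xx n).
Proof.
  intros. unfold GE2. rewrite <- (sum_n_m_mult_l (K := R_Ring)), <- (sum_n_m_mult_l (K := R_Ring)).
  apply sum_n_m_ext. intros t. unfold g2b. apply g2_match; auto.
Qed.

Lemma xx_pos n : (0 < n)%nat -> 0 < xx n < 1.
Proof.
  intros Hn. pose proof (u_gt1 n Hn) as Hu. pose proof (P_pos _ Hu). pose proof (Q_pos _ Hu).
  unfold xx. split. apply Rdiv_lt_0_compat; auto.
  apply (Rmult_lt_reg_r (alpha ^ n + / alpha ^ n)); auto. unfold Rdiv. rewrite Rmult_assoc, Rinv_l by (apply Rgt_not_eq; lra).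
  assert (0 < / alpha ^ n) by (apply Rinv_0_lt_compat; lra). lra.
Qed.

Lemma logterm n : Nat.Even n -> (0 < n)%nat ->
  / 2 * (1 + (atanh (xx n) - xx n) / xx n) = INR n * Luc n / (2 * Fib n * sqrt 5) * ln alpha.
Proof.
  intros He Hn. rewrite atanh_val by auto. pose proof (xx_pos n Hn).
  pose proof (u_gt1 n Hn) as Hu. pose proof (P_pos _ Hu). pose proof (Q_pos _ Hu). pose proof s5_pos.
  rewrite Luc_n, Fib_n by auto. unfold xx. field. repeat split; try lra; try (intro; nra).
Qed.


Theorem theorem18 (n m : nat) (hn : (0 < n)%nat) (hev : Nat.Even n) (hm : (0 < m)%nat) :
  is_series (fun k : nat => term n (2 * m) (S k))
    ( Luc n / (4 * Fib n) *
        sum_n_m (fun j : nat =>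
          5 ^ (m - j) / INR (2 * m - 2 * j) * (Fib n ^ (2 * m - 2 * j) / 2 ^ (2 * m - 2 * j))
          * Fib (n * (2 * m - 2 * j))) 0 (m - 1)
    - Luc n / (4 * Fib n) *
        sum_n_m (fun j : nat =>
          5 ^ (m - j) / INR (2 * m - 2 * j + 1)
          * (Fib n ^ (2 * m - 2 * j + 1) / 2 ^ (2 * m - 2 * j + 1))
          * Luc (n * (2 * m - 2 * j + 1))) 1 m
    - 5 ^ m / INR m * (Fib n ^ (2 * m) / 2 ^ (2 * m + 2)) * Luc (2 * n * m)
    + 1 / Luc n * (5 ^ (m + 1) / INR m) * (Fib n ^ (2 * m + 1) / 2 ^ (2 * m + 3)) * Fib (2 * n * m)
    + 1 / Luc n * (5 ^ m / INR (2 * m - 1)) * (Fib n ^ (2 * m) / 2 ^ (2 * m + 1)) * Luc (n * (2 * m - 1))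
    + INR n * Luc n / (2 * Fib n * sqrt 5) * ln alpha )
  /\
  is_series (fun k : nat => term n (2 * m + 1) (S k))
    ( Luc n / (4 * Fib n) *
        sum_n_m (fun j : nat =>
          5 ^ (m - j) / INR (2 * m - 2 * j + 1)
          * (Fib n ^ (2 * m - 2 * j + 1) / 2 ^ (2 * m - 2 * j + 1))
          * Luc (n * (2 * m - 2 * j + 1))) 0 m
    - Luc n / (4 * Fib n) *
        sum_n_m (fun j : nat =>
          5 ^ (m - j + 1) / INR (2 * m - 2 * j + 2)
          * (Fib n ^ (2 * m - 2 * j + 2) / 2 ^ (2 * m - 2 * j + 2))
          * Fib (n * (2 * m - 2 * j + 2))) 1 m
    - 5 ^ (m + 1) / INR (2 * m + 1) * (Fib n ^ (2 * m + 1) / 2 ^ (2 * m + 2)) * Fib (n * (2 * m + 1))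
    + 1 / Luc n * (5 ^ (m + 1) / INR (2 * m + 1)) * (Fib n ^ (2 * m + 2) / 2 ^ (2 * m + 3)) * Luc (n * (2 * m + 1))
    + 1 / Luc n * (5 ^ (m + 1) / INR m) * (Fib n ^ (2 * m + 1) / 2 ^ (2 * m + 3)) * Fib (2 * m * n)
    - INR n * Luc n / (2 * Fib n * sqrt 5) * ln alpha ).
Proof.
  destruct m as [|q]; [lia|].
  pose proof (xx_pos n hn) as Hx.
  split.
  - assert (E1 : sum_n_m (fun j : nat =>
          5 ^ (S q - j) / INR (2 * S q - 2 * j) * (Fib n ^ (2 * S q - 2 * j) / 2 ^ (2 * S q - 2 * j))
          * Fib (n * (2 * S q - 2 * j))) 0 (S q - 1) = sum_n_m (g1b n) 0 q).
    { replace (S q - 1)%nat with q by lia. rewrite <- (sum_rev (g1b n) q). apply sum_n_m_ext_loc. intros j Hj. unfold g1b.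
      replace (S q - j)%nat with (q - j + 1)%nat by lia.
      replace (2 * S q - 2 * j)%nat with (2 * (q - j) + 2)%nat by lia. reflexivity. }
    assert (E2 : sum_n_m (fun j : nat =>
          5 ^ (S q - j) / INR (2 * S q - 2 * j + 1)
          * (Fib n ^ (2 * S q - 2 * j + 1) / 2 ^ (2 * S q - 2 * j + 1))
          * Luc (n * (2 * S q - 2 * j + 1))) 1 (S q) = sum_n_m (g2b n) 0 q).
    { rewrite <- (sum_rev1 (g2b n) q). apply sum_n_m_ext_loc. intros j Hj. unfold g2b.
      replace (2 * S q - 2 * j + 1)%nat with (2 * (S q - j) + 1)%nat by lia. reflexivity. }
    rewrite E1, E2, S1, S2 by auto.
    pose proof (main_even q (xx n) Hx) as H.
    eapply ser_ext_val; [| |exact H].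
    + intros k. replace (2 * S q)%nat with (2 * q + 2)%nat by lia. symmetry. apply term_tx; auto.
    + rewrite GE_split. pose proof (Lsc_even n q hev hn). pose proof (logterm n hev hn). lra.
  - assert (E1 : sum_n_m (fun j : nat =>
          5 ^ (S q - j) / INR (2 * S q - 2 * j + 1)
          * (Fib n ^ (2 * S q - 2 * j + 1) / 2 ^ (2 * S q - 2 * j + 1))
          * Luc (n * (2 * S q - 2 * j + 1))) 0 (S q) = sum_n_m (g2b n) 0 q + g2b n (S q)).
    { transitivity (sum_n_m (g2b n) 0 (S q)).
      - rewrite <- (sum_rev (g2b n) (S q)). apply sum_n_m_ext_loc. intros j Hj. unfold g2b.
        replace (2 * S q - 2 * j + 1)%nat with (2 * (S q - j) + 1)%nat by lia. reflexivity.
      - rewrite sum_n_Sm by lia. reflexivity. }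
    assert (E2 : sum_n_m (fun j : nat =>
          5 ^ (S q - j + 1) / INR (2 * S q - 2 * j + 2)
          * (Fib n ^ (2 * S q - 2 * j + 2) / 2 ^ (2 * S q - 2 * j + 2))
          * Fib (n * (2 * S q - 2 * j + 2))) 1 (S q) = sum_n_m (g1b n) 0 q).
    { rewrite <- (sum_rev1 (g1b n) q). apply sum_n_m_ext_loc. intros j Hj. unfold g1b.
      replace (2 * S q - 2 * j + 2)%nat with (2 * (S q - j) + 2)%nat by lia. reflexivity. }
    rewrite E1, E2, Rmult_plus_distr_l, S1, S2 by auto.
    assert (G : Luc n / (4 * Fib n) * g2b n (S q) = / 2 * (Ef (2 * q + 2) (xx n) / INR (2 * q + 3))).
    { unfold g2b. rewrite g2_match by auto. replace (2 * S q)%nat with (2 * q + 2)%nat by lia.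
      replace (2 * q + 2 + 1)%nat with (2 * q + 3)%nat by lia. reflexivity. }
    rewrite G.
    pose proof (main_odd q (xx n) Hx) as H.
    eapply ser_ext_val; [| |exact H].
    + intros k. replace (2 * S q + 1)%nat with (2 * q + 1 + 2)%nat by lia. symmetry. apply term_tx; auto.
    + rewrite GE_split. pose proof (Lsc_odd n q hev hn). pose proof (logterm n hev hn). lra.
Qed.
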